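(* There is a linear-time property $\varphi$ (over a finite alphabet $\Sigma$) such that, for every bound $n\in\mathbb{N}$, every safety automaton $\mathcal{A}$ with $L(\mathcal{A})\subseteq\varphi$ and $L_n(L(\mathcal{A}))=L_n(\varphi)$ has at least $n$ states.
   Context: A linear-time property over $\Sigma$ is a set $\varphi\subseteq\Sigma^\omega$. A lasso of length $n$ is a pair $(u,v)$ with $u\in\Sigma^*$, $v\in\Sigma^+$, $|u\cdot v|=n$, inducing $u\cdot v^\omega$. For $\psi\subseteq\Sigma^\omega$, $L_n(\psi)=\{u\cdot v^\omega \in \psi \mid u\in\Sigma^*, v\in\Sigma^+, |u\cdot v|=n\}$. A (nondeterministic) safety automaton is $(Q,Q_0,\delta)$ with finite state set $Q$, initial states $Q_0\subseteq Q$, and $\delta:Q\times\Sigma\to\mathcal{P}(Q)$; it accepts an infinite word iff there is an infinite run $q_0q_1\cdots$ with $q_0\in Q_0$ and $q_{i+1}\in\delta(q_i,\alpha_{i+1})$ on it. $L(\mathcal{A})$ is the accepted language. *)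

(* Defs.v *)
From mathcomp Require Import all_boot.
Set Implicit Arguments. Unset Strict Implicit. Unset Printing Implicit Defensive.

(* Infinite words over Sigma: alpha_1 alpha_2 ... is represented as w 0, w 1, ... *)
Definition word (Sigma : Type) := nat -> Sigma.

Definition ltprop (Sigma : Type) := word Sigma -> Prop.

(* The infinite word u . v^omega, where v = a :: v' is nonempty. *)
Definition lasso_word (Sigma : Type) (u : seq Sigma) (a : Sigma) (v' : seq Sigma)
  : word Sigma :=
  fun i => if i < size u then nth a u i
           else nth a (a :: v') ((i - size u) %% size (a :: v')).

Definition Ln (Sigma : Type) (n : nat) (psi : ltprop Sigma) : ltprop Sigma :=
  fun w => psi w /\
    exists (u : seq Sigma) (a : Sigma) (v' : seq Sigma),
      size u + size (a :: v') = n /\ w = lasso_word u a v'.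

Record safety_automaton (Sigma : finType) := SafetyAutomaton {
  state : finType;
  init : {set state};
  delta : state -> Sigma -> {set state}
}.

Definition accepts (Sigma : finType) (A : safety_automaton Sigma) : ltprop Sigma :=
  fun w => exists q : nat -> state A,
    q 0 \in init A /\ forall i, q i.+1 \in delta (q i) (w i).

(* Main.v *)
Require Import Defs.
From mathcomp Require Import all_boot.
From Stdlib Require Import Classical.

Section Pump.
Variables (A : safety_automaton bool) (q : nat -> state A) (i j : nat).
Hypothesis hij : i < j.
Hypothesis hq : q i = q j.
Hypothesis hstep : forall k, k < j -> q k.+1 \in delta (q k) false.

Fixpoint fidx (k : nat) : nat :=
  match k with
  | 0 => 0
  | k'.+1 => if (fidx k').+1 == j then i else (fidx k').+1
  end.

Lemma fidx_lt k : fidx k < j.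
Proof.
elim: k => [|k IH] /=; first by apply: leq_ltn_trans hij.
case: eqP => [_|ne]; first by [].
by rewrite ltn_neqAle; apply/andP; split; [apply/eqP|].
Qed.

Lemma pump_acc : q 0 \in init A -> accepts A (fun _ => false).
Proof.
move=> h0; exists (fun k => q (fidx k)); split => // k /=.
case: eqP => [e|_]; last by apply: hstep; apply: fidx_lt.
rewrite hq -{1}e; apply: hstep; apply: fidx_lt.
Qed.
End Pump.

Theorem theorem4 :
  exists (Sigma : finType) (phi : ltprop Sigma),
    forall (n : nat) (A : safety_automaton Sigma),
      (forall w, accepts A w -> phi w) ->
      (forall w, Ln n (accepts A) w <-> Ln n phi w) ->
      n <= #|state A|.
Proof.
exists (bool : finType), (fun w => exists i, w i = true).
move=> [|n] A hsub hL; first by [].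
set w := lasso_word (nseq n false) true [::].
have hw : Ln n.+1 (fun w => exists i, w i = true) w.
  split.
    exists n; rewrite /w /lasso_word size_nseq ltnn subnn //.
  exists (nseq n false), true, [::]; split => //.
  by rewrite size_nseq addn1.
case: (proj2 (hL w) hw) => -[q [h0 hs]] _.
have hstep : forall k, k < n -> q k.+1 \in delta (q k) false.
  move=> k hk; have := hs k.
  by rewrite /w /lasso_word size_nseq hk nth_nseq hk.
case: (leqP n.+1 #|state A|) => // hlt.
exfalso.
pose g := fun k : 'I_n.+1 => q k.
have ninj : ~ injective g.
  move=> inj; have := @leq_card _ _ g inj; rewrite card_ord => h.
  by move: (leq_trans h hlt); rewrite ltnn.
have [x [y [exy nxy]]] : exists x y : 'I_n.+1, g x = g y /\ x <> y.
  apply: NNPP => hne; apply: ninj => x y exy.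
  apply: NNPP => nxy; apply: hne; by exists x, y.
have key : forall a b : nat, a < b -> b <= n -> q a = q b -> False.
  move=> a b ab bn qab.
  have acc : accepts A (fun _ => false).
    apply: (@pump_acc A q a b ab qab) => // k kb.
    by apply: hstep; apply: leq_trans kb bn.
  by case: (hsub _ acc) => t.
have hx := ltn_ord x; have hy := ltn_ord y.
have : (x : nat) <> y by move=> e; apply: nxy; apply: val_inj.
case: (ltngtP x y) => // [xy|yx] _.
  by apply: (key x y xy).
by apply: (key y x yx) => //; rewrite /g in exy.
Qed.
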